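(* Let $n \ge 2$ and let $\lambda = a_1\omega_1 + \cdots + a_{2n-1}\omega_{2n-1}$ ($a_i \in \mathbb{Z}_{\ge 0}$) be a dominant weight of $\mathfrak{sl}(2n,\mathbb{C})$, and assume that either $n = 2$ or $\lambda = a_1\omega_1 + a_2\omega_2 + a_3\omega_3$. Let $\nu = b_1\omega_1 + \cdots + b_n\omega_n$ ($b_i \in \mathbb{Z}_{\ge 0}$). Then there is a bijection $$\operatorname{domres}(\lambda,\nu) \;\longleftrightarrow\; \bigcup_{\substack{\eta \text{ dominant},\ \text{shape of } \eta \subseteq \text{shape of } \lambda,\\ \text{shape of } \eta \text{ even}}} \operatorname{LR}(\lambda/\eta,\nu).$$
   Context: $\omega_i$ are the fundamental weights of $\mathfrak{sl}(2n,\mathbb{C})$, $\varepsilon_i$ ($1\le i\le 2n$) the standard weights with $\varepsilon_i(\operatorname{diag}(a_1,\dots,a_{2n}))=a_i$. The shape of a dominant weight $\mu=\sum c_i\omega_i$ is the Young diagram (left- and top-justified) with $c_i$ columns of length $i$, longer columns to the left; containment is as diagrams aligned at top-left corners; a shape is even if all its columns have even length. Let $\mathfrak{g}^\sigma \cong \mathfrak{sp}(2n,\mathbb{C})$ be the fixed points of the automorphism $\sigma$ of $\mathfrak{sl}(2n,\mathbb{C})$ induced by the folding $i \mapsto 2n-i$ of the $A_{2n-1}$ Dynkin diagram, with Cartan subalgebra $\mathfrak{h}^\sigma$ (the $\sigma$-fixed diagonal matrices). Set $\hat\varepsilon_i = \varepsilon_i|_{\mathfrak{h}^\sigma}$, so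 $\hat\varepsilon_{2n+1-i} = -\hat\varepsilon_i$; the fundamental weights of $\mathfrak{g}^\sigma$ are $\hat\omega_i = \hat\varepsilon_1+\cdots+\hat\varepsilon_i$, and $\hat\nu := b_1\hat\omega_1+\cdots+b_n\hat\omega_n$. Semi-standard Young tableaux of the shape of $\lambda$ have entries in $\{1,\dots,2n\}$, rows weakly increasing left to right, columns strictly increasing downward; the word of a tableau reads rows right to left, top row first. $\operatorname{domres}(\lambda)$ is the set of such tableaux $\mathscr{T}$ with word $w_1\cdots w_k$ such that for every prefix $w_1\cdots w_j$, writing $\sum_{l\le j}\hat\varepsilon_{w_l} = \sum_{i=1}^n c_i\hat\varepsilon_i$, one has $c_1\ge\cdots\ge c_n\ge 0$. $\operatorname{domres}(\lambda,\nu)$ is the set of $\mathscr{T}\in\operatorname{domres}(\lambda)$ with $\sum_{l=1}^k \hat\varepsilon_{w_l} = \hat\nu$. For dominant $\eta$ with shape contained in that of $\lambda$, $\operatorname{LR}(\lambda/\eta,\nu)$ is the set of fillings of the boxes of the shape of $\lambda$ not in the shape of $\eta$ with letters from $\{1,\dots,2n\}$, rows weakly increasing, columns strictly increasing, whose word (rows read right to left, top to bottom, ignoring empty boxes) is dominant (in every prefix the number of letters $i$ is at least the number of letters $i+1$, for all $i$) and has weight $\nu$ (the number of entries equal to $i$ equals the number of boxes in row $i$ of the shape of $\nu$). *)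

(* Defs.v *)
From mathcomp Require Import all_boot all_order all_algebra.
Set Implicit Arguments. Unset Strict Implicit. Unset Printing Implicit Defensive.
Import GRing.Theory Num.Theory.

(* A dominant weight  mu = c_1 w_1 + ... + c_m w_m  is encoded by the list
   c = [:: c_1; ...; c_m]  (so  nth 0 c j = c_(j+1), 0-based indices).
   Its shape (c_i columns of length i, longer columns left) has, in (0-based)
   row r, exactly  rowlen c r = c_(r+1) + ... + c_m  boxes.
   A filling of a (skew) shape is a list of rows (seq (seq nat)), row r listing
   the entries of row r from left to right. *)

Definition rowlen (c : seq nat) (r : nat) : nat := \sum_(r <= j < size c) nth 0 c j.

Definition entry (T : seq (seq nat)) (r k : nat) : nat := nth 0 (nth [::] T r) k.

Definition word (T : seq (seq nat)) : seq nat := flatten (map rev T).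

Definition prefixes (w : seq nat) : seq (seq nat) :=
  [seq take j w | j <- iota 0 (size w).+1].

Definition ssyt (n : nat) (a : seq nat) (T : seq (seq nat)) : bool :=
  [&& size T == size a,
      all (fun r => size (nth [::] T r) == rowlen a r) (iota 0 (size a)),
      all (fun x => (1 <= x) && (x <= 2 * n)) (flatten T),
      all (sorted leq) T &
      all (fun r => all (fun k => entry T r k < entry T r.+1 k)
                        (iota 0 (rowlen a r.+1)))
          (iota 0 (size a).-1)].

(* coefficient of hat-eps_i in  sum_{l} hat-eps_{w_l}, using hat-eps_{2n+1-i} = - hat-eps_i *)
Definition hatcoef (n : nat) (w : seq nat) (i : nat) : int :=
  ((count_mem i w)%:Z - (count_mem (2 * n + 1 - i)%N w)%:Z)%R.

Definition hatdominant (n : nat) (w : seq nat) : bool :=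
  all (fun i => (hatcoef n w i.+1 <= hatcoef n w i)%R) (iota 1 n.-1)
  && (0 <= hatcoef n w n)%R.

Definition domres (n : nat) (a : seq nat) (T : seq (seq nat)) : bool :=
  ssyt n a T && all (hatdominant n) (prefixes (word T)).

(* domres(lambda, nu): total restricted weight equals  hat nu = sum_i b_i hat-omega_i
   = sum_i (b_i + ... + b_n) hat-eps_i *)
Definition domres_nu (n : nat) (a b : seq nat) (T : seq (seq nat)) : bool :=
  domres n a T &&
  all (fun i => hatcoef n (word T) i == ((rowlen b i.-1)%:Z : int)) (iota 1 n).

Definition shape_sub (e a : seq nat) : bool :=
  all (fun r => rowlen e r <= rowlen a r) (iota 0 (maxn (size e) (size a))).

(* all columns of the shape of eta have even length: c_i = 0 for odd i *)
Definition even_shape (e : seq nat) : bool :=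
  all (fun j => odd j.+1 ==> (nth 0 e j == 0)) (iota 0 (size e)).

(* filling of lambda/eta: row r holds the entries of boxes (r, k),
   rowlen e r <= k < rowlen a r, stored at position k - rowlen e r *)

Definition skew_tableau (n : nat) (a e : seq nat) (T : seq (seq nat)) : bool :=
  [&& size T == size a,
      all (fun r => size (nth [::] T r) == rowlen a r - rowlen e r) (iota 0 (size a)),
      all (fun x => (1 <= x) && (x <= 2 * n)) (flatten T),
      all (sorted leq) T &
      all (fun r => all (fun k => (rowlen e r <= k) ==>
                         (entry T r (k - rowlen e r) < entry T r.+1 (k - rowlen e r.+1)))
                        (iota 0 (rowlen a r.+1)))
          (iota 0 (size a).-1)].

Definition lattice_word (n : nat) (w : seq nat) : bool :=
  all (fun p => all (fun i => count_mem i.+1 p <= count_mem i p) (iota 1 (2 * n)))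
      (prefixes w).

(* weight nu: number of entries i = number of boxes in row i of the shape of nu *)
Definition LR (n : nat) (a e b : seq nat) (T : seq (seq nat)) : bool :=
  [&& skew_tableau n a e T, lattice_word n (word T) &
      all (fun i => count_mem i (word T) == rowlen b i.-1) (iota 1 (2 * n))].

(* elements of the union over dominant even eta inside lambda of LR(lambda/eta, nu),
   tagged by eta (the union is disjoint since distinct eta give distinct skew shapes) *)
Definition LRunion (n : nat) (a b : seq nat) (p : seq nat * seq (seq nat)) : bool :=
  [&& size p.1 == (2 * n).-1, shape_sub p.1 a, even_shape p.1 & LR n a p.1 b p.2].

(* Main.v *)
Require Import Defs.
From mathcomp Require Import all_boot all_order all_algebra.
From mathcomp Require Import zify.
Set Implicit Arguments. Unset Strict Implicit. Unset Printing Implicit Defensive.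
Import GRing.Theory Num.Theory.

Lemma hatcoef_cat n u v i : hatcoef n (u ++ v) i = (hatcoef n u i + hatcoef n v i)%R.
Proof. rewrite /hatcoef !count_cat; lia. Qed.

Lemma hatcoef_nseq n m v i :
  hatcoef n (nseq m v) i = (((v == i) * m)%:Z - ((v == (2 * n + 1 - i)%N) * m)%:Z)%R.
Proof. by rewrite /hatcoef !count_nseq. Qed.

Lemma hatcoef_rev n w i : hatcoef n (rev w) i = hatcoef n w i.
Proof. by rewrite /hatcoef !count_rev. Qed.

Lemma hatcoef1 n y i :
  hatcoef n [:: y] i = (((y == i) : nat)%:Z - ((y == (2 * n + 1 - i)%N) : nat)%:Z)%R.
Proof. rewrite /hatcoef /=; lia. Qed.

Lemma hatcoef_nil n i : hatcoef n [::] i = 0%R.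
Proof. by []. Qed.

Lemma hz n w i : i \notin w -> (2 * n + 1 - i)%N \notin w -> hatcoef n w i = 0%R.
Proof. by rewrite /hatcoef => /count_memPn -> /count_memPn ->. Qed.

Lemma allprefP (P : pred (seq nat)) w :
  reflect (forall j, P (take j w)) (all P (prefixes w)).
Proof.
apply: (iffP allP) => H.
- move=> j; case: (leqP j (size w)) => hj.
    apply: H; rewrite /prefixes; apply/mapP; exists j => //; rewrite mem_iota; lia.
  rewrite take_oversize; last lia.
  have := H (take (size w) w); rewrite take_size; apply.
  rewrite /prefixes; apply/mapP; exists (size w); [rewrite mem_iota; lia|by rewrite take_size].
- by move=> p /mapP [j _ ->]; apply: H.
Qed.

Lemma pref_cat (P : pred (seq nat)) u v :
  (forall j, P (take j u)) -> (forall j, P (u ++ take j v)) ->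
  forall j, P (take j (u ++ v)).
Proof.
move=> Hu Hv j; rewrite take_cat; case: ifP => _; first exact: Hu.
exact: Hv.
Qed.

Lemma pref_nseq (P : pred (seq nat)) u m v :
  (forall j, j <= m -> P (u ++ nseq j v)) -> forall j, P (u ++ take j (nseq m v)).
Proof.
move=> H j; case: (leqP j m) => hj; first by rewrite take_nseq //; apply: H.
by rewrite take_oversize ?size_nseq; [apply: H|lia].
Qed.

Lemma pref_of (P : pred (seq nat)) (w p q : seq nat) : (forall j, P (take j w)) -> w = p ++ q -> P p.
Proof. by move=> H E; have := H (size p); rewrite E take_size_cat. Qed.

Lemma HD1 n w i : hatdominant n w -> 1 <= i -> i < n ->
  (hatcoef n w i.+1 <= hatcoef n w i)%R.
Proof.
case/andP => /allP H _ h1 h2; apply: H; rewrite mem_iota; lia.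
Qed.

Lemma HD2 n w i : hatdominant n w -> 1 <= i <= n -> (0 <= hatcoef n w i)%R.
Proof.
move=> Hd; have [_ H0] := andP Hd.
move Ed: (n - i) => d; elim: d i Ed => [|d IH] i Ed hi.
  by have -> : i = n by lia.
apply: Order.POrderTheory.le_trans (IH i.+1 _ _) (HD1 Hd _ _); lia.
Qed.

Lemma bad n w y lo : 1 <= lo -> lo < y -> y <= 2 * n + 1 - lo ->
  (forall i, lo <= i <= n -> hatcoef n w i = 0%R) ->
  hatdominant n (w ++ [:: y]) -> False.
Proof.
move=> h1 h2 h3 Hw Hd.
case: (leqP y n) => hy.
  have := HD1 Hd (i := y.-1) ltac:(lia) ltac:(lia).
  have -> : y.-1.+1 = y by lia.
  rewrite !hatcoef_cat !hatcoef1 !Hw; lia.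
have := HD2 Hd (i := (2 * n + 1 - y)%N) ltac:(lia).
rewrite !hatcoef_cat !hatcoef1 !Hw; lia.
Qed.

Lemma lat_pref n w p q : lattice_word n w -> w = p ++ q ->
  forall i, 1 <= i <= 2 * n -> count_mem i.+1 p <= count_mem i p.
Proof.
move=> /allprefP H E i hi.
have := H (size p); rewrite E take_size_cat // => /allP; apply; rewrite mem_iota; lia.
Qed.

Lemma lat_bad n w p y q : lattice_word n w -> w = p ++ y :: q ->
  2 <= y <= 2 * n + 1 -> count_mem y.-1 p = 0 -> False.
Proof.
move=> H E hy h0.
have := lat_pref (p := p ++ [:: y]) H (q := q) _ (i := y.-1) _.
rewrite -catA /= => /(_ E); have -> : y.-1.+1 = y by lia.
rewrite !count_cat h0 /= eqxx; lia.
Qed.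

Lemma first_bad (P : pred nat) s : ~~ all P s ->
  exists s1 y s2, [/\ s = s1 ++ y :: s2, all P s1 & ~~ P y].
Proof.
elim: s => [|x s IH] //=; case Px: (P x) => /=.
  move/IH => [s1 [y [s2 [-> h1 h2]]]].
  by exists (x :: s1), y, s2; rewrite /= Px.
by move=> _; exists [::], x, s; rewrite Px.
Qed.

Lemma rev_dec s s1 y s2 : sorted leq s -> rev s = s1 ++ y :: s2 ->
  all (fun x => y <= x) s1.
Proof.
move=> Hs E.
have : sorted geq (rev s) by rewrite rev_sorted.
rewrite E (sorted_pairwise (fun y x z (h1 : geq x y) (h2 : geq y z) => leq_trans h2 h1)) pairwise_cat.
case/and3P => /allrelP H _ _; apply/allP => x hx.
by apply: (H x y hx); rewrite mem_head.
Qed.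

Lemma sorted_cons (v : nat) t : sorted leq (v :: t) = all (leq v) t && sorted leq t.
Proof. by rewrite /= (path_sortedE leq_trans). Qed.

Lemma sorted_nseq_cat c v s : sorted leq s -> all (leq v) s -> sorted leq (nseq c v ++ s).
Proof.
move=> Hs Ha; elim: c => [|c IH] //=.
rewrite -/(sorted leq (v :: (nseq c v ++ s))) sorted_cons IH all_cat Ha andbT.
by rewrite all_nseq leqnn orbT.
Qed.

Lemma sort_count (s1 s2 : seq nat) : sorted leq s1 -> sorted leq s2 ->
  (forall x, count_mem x s1 = count_mem x s2) -> s1 = s2.
Proof.
move=> h1 h2 H; apply: (sorted_eq leq_trans anti_leq h1 h2).
by apply/allP => x _ /=; rewrite H.
Qed.

Lemma flatten_nseq_nil (T : Type) m : flatten (nseq m ([::] : seq T)) = [::].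
Proof. by elim: m. Qed.

Lemma word3 x y z m : word ([:: x; y; z] ++ nseq m [::]) = rev x ++ rev y ++ rev z.
Proof.
rewrite /word map_cat flatten_cat /=.
have -> : map rev (nseq m ([::] : seq nat)) = nseq m [::] by elim: m => //= m ->.
by rewrite flatten_nseq_nil !cats0 catA.
Qed.

Lemma rows3 (T : seq (seq nat)) m : size T = m -> 3 <= m ->
  (forall r, 3 <= r -> nth [::] T r = [::]) ->
  T = [:: nth [::] T 0; nth [::] T 1; nth [::] T 2] ++ nseq (m - 3) [::].
Proof.
move=> hs hm H; apply: (eq_from_nth (x0 := [::])).
  by rewrite size_cat size_nseq /=; lia.
move=> i hi; rewrite nth_cat /=; case: ifP => hi3.
  by case: i hi hi3 => [|[|[|]]].
by rewrite nth_nseq; case: ifP => _; apply: H; lia.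
Qed.
Lemma rowlen_ge c r : size c <= r -> rowlen c r = 0.
Proof. by move=> h; rewrite /rowlen big_geq. Qed.

Lemma rowlen_S c r : r < size c -> rowlen c r = nth 0 c r + rowlen c r.+1.
Proof. by move=> h; rewrite /rowlen big_ltn. Qed.

Lemma rowlen_zero c r : (forall j, r <= j -> nth 0 c j = 0) -> rowlen c r = 0.
Proof.
move Ed: (size c - r) => d; elim: d r Ed => [|d IH] r Ed H.
  by rewrite rowlen_ge //; lia.
rewrite rowlen_S; last lia.
rewrite H // IH //; [lia| move=> j hj; apply: H; lia].
Qed.

Lemma rowlen_mono c r : rowlen c r.+1 <= rowlen c r.
Proof.
case: (leqP (size c) r) => h.
  by rewrite !rowlen_ge //; lia.
rewrite (rowlen_S h); lia.
Qed.

Lemma rowlen_split c r j : r <= j -> j < size c -> nth 0 c j <= rowlen c r.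
Proof.
move=> h1 h2; rewrite /rowlen (big_cat_nat (n := j)) //=; last lia.
rewrite [X in _ + X]big_ltn //; lia.
Qed.

Lemma iota_all_true (P : pred nat) s m : (forall r, s <= r -> P r) -> all P (iota s m).
Proof. by move=> H; apply/allP => r; rewrite mem_iota => /andP[h _]; apply: H. Qed.

Lemma ssyt3 n a m R1 R2 R3 : size a = 3 + m -> (forall r, 3 <= r -> rowlen a r = 0) ->
  ssyt n a ([:: R1; R2; R3] ++ nseq m [::]) =
  [&& [&& size R1 == rowlen a 0, size R2 == rowlen a 1 & size R3 == rowlen a 2],
      all (fun x => (1 <= x) && (x <= 2 * n)) (R1 ++ R2 ++ R3),
      [&& sorted leq R1, sorted leq R2 & sorted leq R3],
      all (fun k => nth 0 R1 k < nth 0 R2 k) (iota 0 (rowlen a 1)) &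
      all (fun k => nth 0 R2 k < nth 0 R3 k) (iota 0 (rowlen a 2))].
Proof.
move=> Ha Hr; rewrite /ssyt size_cat size_nseq Ha /= eqxx /=.
rewrite (@iota_all_true _ 3 (0 + m)); last first.
  move=> [|[|[|r]]] hr //=.
  by rewrite nth_nseq if_same Hr.
rewrite (@iota_all_true _ 2 (0 + m)); last by move=> r hr /=; rewrite Hr.
rewrite flatten_nseq_nil /= cats0 all_nseq orbT /entry /= !andbT.
by [].
Qed.


Lemma HD_intro n w : (forall i, 1 <= i -> i < n -> (hatcoef n w i.+1 <= hatcoef n w i)%R) ->
  (0 <= hatcoef n w n)%R -> hatdominant n w.
Proof.
move=> H1 H2; rewrite /hatdominant H2 andbT; apply/allP => i; rewrite mem_iota => hi.
apply: H1; lia.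
Qed.

Ltac arith_hyp T := lazymatch T with
 | is_true (_ <= _) => idtac | is_true (_ < _) => idtac
 | @eq ?A _ _ => first [unify A nat | unify A int | unify A bool]
 | is_true (~~ _) => idtac | is_true (_ == _) => idtac | is_true (_ || _) => idtac
 | is_true (_ && _) => idtac
 | is_true (@Order.le _ _ _ _) => idtac | is_true (@Order.lt _ _ _ _) => idtac
 | ~ _ => idtac | _ <> _ => idtac | nat => idtac | int => idtac | _ /\ _ => idtac | _ \/ _ => idtac
 end.
Ltac clean := repeat match goal with H : ?T |- _ => tryif arith_hyp T then fail else clear H end.
Ltac lia' := clean; lia.

Ltac simpl_eqs := repeat match goal with
 | |- context [?x == ?y :> nat] =>
    first [ rewrite (_ : (x == y) = false); [| apply/eqP; lia']
          | rewrite (_ : (x == y) = true); [| apply/eqP; lia'] ] end.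

Definition W n x1 x2 x3 x4 x5 x6 :=
  nseq x1 1 ++ nseq x2 (2 * n) ++ nseq x3 2 ++ nseq x4 (2 * n) ++ nseq x5 (2 * n).-1 ++ nseq x6 3.

Lemma W_hd n x1 x2 x3 x4 x5 x6 : 2 <= n ->
  (x3%:Z - x5%:Z <= x1%:Z - x2%:Z - x4%:Z)%R -> (x6%:Z <= x3%:Z - x5%:Z)%R ->
  (0 <= x3%:Z - x5%:Z)%R -> (n = 2 -> x6 = 0) ->
  hatdominant n (W n x1 x2 x3 x4 x5 x6).
Proof.
move=> hn h1 h2 h3 h4; apply: HD_intro.
  move=> i hi1 hi2; rewrite /W !hatcoef_cat !hatcoef_nseq.
  case: i hi1 hi2 => [|[|[|[|i]]]] hi1 hi2 //; simpl_eqs; rewrite ?mul0n ?mul1n; lia.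
rewrite /W !hatcoef_cat !hatcoef_nseq.
case: n hn h4 => [|[|[|[|n]]]] hn h4 //; simpl_eqs; rewrite ?mul0n ?mul1n; lia.
Qed.


Lemma notin_all (Q : pred nat) w x : all Q w -> ~~ Q x -> x \notin w.
Proof. by move=> /allP H hx; apply/negP => /H; apply/negP. Qed.

Lemma sorted_nseq c v : sorted leq (nseq c v).
Proof. by rewrite -(cats0 (nseq c v)); apply: sorted_nseq_cat. Qed.

Lemma block3 (s : seq nat) v1 v2 v3 : sorted leq s ->
  all (fun x => [|| x == v1, x == v2 | x == v3]) s -> v1 < v2 < v3 ->
  s = nseq (count_mem v1 s) v1 ++ nseq (count_mem v2 s) v2 ++ nseq (count_mem v3 s) v3.
Proof.
move=> Hs Ha hv; apply: sort_count => //.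
  apply: sorted_nseq_cat; last by rewrite all_cat !all_nseq; apply/andP; split; apply/orP; right; lia.
  apply: sorted_nseq_cat; first exact: sorted_nseq.
  by rewrite all_nseq; apply/orP; right; lia.
move=> x; rewrite !count_cat !count_nseq /=.
case: (boolP (x \in s)) => hx.
  have := allP Ha x hx; case/or3P => /eqP ->; simpl_eqs; rewrite ?mul0n ?mul1n; lia.
have h0 : count_mem x s = 0 by apply/count_memPn.
rewrite h0.
have e : forall v, (v == x) * count_mem v s = 0.
  by move=> v; case: eqP => [->|]; rewrite ?h0 ?mul0n.
by rewrite !e.
Qed.

Lemma block2 (s : seq nat) v1 v2 : sorted leq s ->
  all (fun x => (x == v1) || (x == v2)) s -> v1 < v2 ->
  s = nseq (count_mem v1 s) v1 ++ nseq (count_mem v2 s) v2.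
Proof.
move=> Hs Ha hv.
have := @block3 s v1 v2 v2.+1 Hs.
have -> : count_mem v2.+1 s = 0.
  apply/count_memPn; apply: (notin_all Ha); apply/negP => /orP[] /eqP; lia.
rewrite cats0; apply => //; last lia.
by apply/allP => x /(allP Ha) /orP[] ->; rewrite ?orbT.
Qed.

Lemma nth_blocks3 c1 v1 c2 v2 c3 v3 k :
  nth 0 (nseq c1 v1 ++ nseq c2 v2 ++ nseq c3 v3) k =
  if k < c1 then v1 else if k < c1 + c2 then v2 else if k < c1 + c2 + c3 then v3 else 0.
Proof.
rewrite !nth_cat !size_nseq !nth_nseq.
repeat (case: ifP => ?); lia.
Qed.


Lemma D_char n a b R1 R2 R3 :
  2 <= n -> size a = 3 + (2 * n - 4) -> (forall r, 3 <= r -> rowlen a r = 0) ->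
  domres_nu n a b ([:: R1; R2; R3] ++ nseq (2 * n - 4) [::]) ->
  [/\ R1 = nseq (rowlen a 0) 1,
      R2 = nseq (rowlen a 1 - count_mem (2 * n) R2) 2 ++ nseq (count_mem (2 * n) R2) (2 * n),
      R3 = nseq (rowlen a 2 - count_mem (2 * n) R3 - count_mem (2 * n).-1 R3) 3
           ++ nseq (count_mem (2 * n).-1 R3) (2 * n).-1 ++ nseq (count_mem (2 * n) R3) (2 * n),
      (n = 2 -> count_mem (2 * n) R3 + count_mem (2 * n).-1 R3 = rowlen a 2) &
      [/\ count_mem (2 * n) R3 + count_mem (2 * n).-1 R3 <= rowlen a 2,
      count_mem (2 * n) R2 + rowlen a 2 <= rowlen a 1 &
      count_mem (2 * n) R3 <= rowlen a 0 - rowlen a 1]].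
Proof.
move=> hn Ha Hr /andP[/andP[Hs Hpre] Hw].
rewrite ssyt3 // in Hs.
case/and5P: Hs => /and3P[/eqP s1 /eqP s2 /eqP s3] Hrng /and3P[so1 so2 so3] c12 c23.
rewrite word3 in Hpre; move/allprefP: Hpre => Hpre.
have L12 := rowlen_mono a 0; have L23 := rowlen_mono a 1.
have rng : forall x, x \in R1 ++ R2 ++ R3 -> 1 <= x <= 2 * n.
  by move=> x hx; have := allP Hrng x hx.
have E1 : R1 = nseq (rowlen a 0) 1.
  rewrite -s1; apply/all_pred1P.
  apply/negPn/negP => Hn.
  have : ~~ all (pred1 1) (rev R1) by rewrite all_rev.
  case/first_bad => s1' [y [s2' [E Ha1 Hy]]].
  have hy : y \in R1 by rewrite -mem_rev E mem_cat mem_head orbT.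
  have := rng y; rewrite mem_cat hy => /(_ isT) hy'.
  have Hd := rev_dec so1 E.
  have ny1 : y != 1 := Hy.
  have Es : s1' = [::].
    case: s1' E Ha1 Hd => // x s _ /= /andP[/eqP hx _] /andP[hyx _].
    have : y != 1 := Hy; lia'.
  rewrite Es in E.
  apply: (@bad n [::] y 1); [done|lia'|lia'|by move=> i _; rewrite hatcoef_nil|].
  by apply: (pref_of Hpre (q := s2' ++ rev R2 ++ rev R3)); rewrite E.
have lb2 : forall k, k < rowlen a 1 -> 2 <= nth 0 R2 k.
  move=> k hk; have := allP c12 k; rewrite mem_iota => /(_ ltac:(lia')).
  rewrite E1 nth_nseq ifT; lia'.
have lb2' : forall x, x \in R2 -> 2 <= x.
  by move=> x /(nthP 0) [k hk <-]; apply: lb2; rewrite -s2.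
have A2 : all (fun x => (x == 2) || (x == 2 * n)) R2.
  apply/negPn/negP => Hn.
  have : ~~ all (fun x => (x == 2) || (x == 2 * n)) (rev R2) by rewrite all_rev.
  case/first_bad => s1' [y [s2' [E Ha1 Hy]]].
  have hy : y \in R2 by rewrite -mem_rev E mem_cat mem_head orbT.
  have := rng y; rewrite !mem_cat hy orbT => /(_ isT) hy'.
  have hy2 := lb2' y hy.
  have Hd := rev_dec so2 E.
  move: Hy; rewrite /= negb_or => /andP[/eqP ny2 /eqP ny2n].
  have Hs1 : all (fun x => (x == 1) || (x == 2 * n)) (rev R1 ++ s1').
    rewrite all_cat E1 rev_nseq all_nseq eqxx orbT /=.
    apply/allP => x hx; have := allP Hd x hx; have := allP Ha1 x hx.
    case/orP => /eqP -> /=; last by rewrite eqxx orbT.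
    lia'.
  apply: (@bad n (rev R1 ++ s1') y 2); [done|lia'|lia'| |].
    by move=> i hi; apply: hz; apply: (notin_all Hs1); simpl_eqs.
  by apply: (pref_of Hpre (q := s2' ++ rev R3)); rewrite E -!catA.
have E2 := block2 so2 A2 ltac:(lia').
have c2 : count_mem 2 R2 = rowlen a 1 - count_mem (2 * n) R2.
  by have := congr1 size E2; rewrite size_cat !size_nseq s2; lia'.
rewrite c2 in E2.
have m2le : count_mem (2 * n) R2 <= rowlen a 1 by rewrite -s2 count_size.
have lb3 : forall k, k < rowlen a 2 -> 3 <= nth 0 R3 k.
  move=> k hk.
  have := allP c23 k; rewrite mem_iota => /(_ ltac:(lia')).
  have := lb2 k ltac:(lia'); lia'.
have lb3' : forall x, x \in R3 -> 3 <= x.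
  by move=> x /(nthP 0) [k hk <-]; apply: lb3; rewrite -s3.
have A3 : all (fun x => [|| x == 3, x == (2 * n).-1 | x == 2 * n]) R3.
  apply/negPn/negP => Hn.
  have : ~~ all (fun x => [|| x == 3, x == (2 * n).-1 | x == 2 * n]) (rev R3) by rewrite all_rev.
  case/first_bad => s1' [y [s2' [E Ha1 Hy]]].
  have hy : y \in R3 by rewrite -mem_rev E mem_cat mem_head orbT.
  have := rng y; rewrite !mem_cat hy !orbT => /(_ isT) hy'.
  have hy3 := lb3' y hy.
  have Hd := rev_dec so3 E.
  move: Hy; rewrite /= !negb_or => /and3P[/eqP ny3 /eqP ny2n1 /eqP ny2n].
  have Hs1 : all (fun x => [|| x == 1, x == 2, x == (2 * n).-1 | x == 2 * n])
                 (rev R1 ++ rev R2 ++ s1').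
    rewrite !all_cat E1 E2 rev_cat !rev_nseq !all_cat !all_nseq !eqxx !orbT /=.
    apply/allP => x hx; have := allP Hd x hx; have := allP Ha1 x hx.
    case/or3P => /eqP -> /=; rewrite ?eqxx ?orbT //.
    lia'.
  apply: (@bad n (rev R1 ++ rev R2 ++ s1') y 3); [done|lia'|lia'| |].
    by move=> i hi; apply: hz; apply: (notin_all Hs1); simpl_eqs.
  by apply: (pref_of Hpre (q := s2')); rewrite E -!catA.
have [E3 h2] : R3 = nseq (rowlen a 2 - count_mem (2 * n) R3 - count_mem (2 * n).-1 R3) 3
           ++ nseq (count_mem (2 * n).-1 R3) (2 * n).-1 ++ nseq (count_mem (2 * n) R3) (2 * n)
  /\ (n = 2 -> count_mem (2 * n) R3 + count_mem (2 * n).-1 R3 = rowlen a 2).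
  case: (ltnP 2 n) => hn3.
    have E3 := block3 so3 A3 ltac:(lia').
    have := congr1 size E3; rewrite !size_cat !size_nseq s3 => hsz.
    split; last lia'.
    by rewrite {1}E3; congr (nseq _ _ ++ _); lia'.
  have hn2 : n = 2 by lia'.
  subst n; rewrite (_ : 2 * 2 = 4) // /= in A3 *.
  have A3' : all (fun x => (x == 3) || (x == 4)) R3.
    by apply/allP => x /(allP A3) /or3P[] ->; rewrite ?orbT.
  have E3 := block2 so3 A3' isT.
  have := congr1 size E3; rewrite !size_cat !size_nseq s3 => hsz.
  split; last by move=> _; rewrite hsz addnC.
  rewrite {1}E3; have -> : rowlen a 2 - count_mem 4 R3 - count_mem 3 R3 = 0 by lia'.
  by [].
have sz3 : count_mem (2 * n) R3 + count_mem (2 * n).-1 R3 <= rowlen a 2.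
  by have := congr1 size E3; rewrite !size_cat !size_nseq s3; lia'.
split => //.
split => //.
- apply/negP => /negP; rewrite -ltnNge => hlt.
  remember (rowlen a 1 - count_mem (2 * n) R2) as k eqn:hk.
  have := allP c23 k; rewrite mem_iota => /(_ ltac:(lia')).
  rewrite E2 nth_cat size_nseq ifN; last lia'.
  rewrite nth_nseq ifT; last lia'.
  have : nth 0 R3 k \in R1 ++ R2 ++ R3 by rewrite !mem_cat mem_nth ?orbT //; rewrite s3; lia'.
  by move/rng; lia'.
- have Hd : hatdominant n (rev R1 ++ rev R2 ++ nseq (count_mem (2 * n) R3) (2 * n)).
    apply: (pref_of Hpre (q := nseq (count_mem (2 * n).-1 R3) (2 * n).-1 ++
           nseq (rowlen a 2 - count_mem (2 * n) R3 - count_mem (2 * n).-1 R3) 3)).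
    by rewrite {1}E3 !rev_cat !rev_nseq -!catA.
  have := HD1 Hd (i := 1) isT ltac:(lia').
  rewrite E1 E2 !rev_cat !rev_nseq !hatcoef_cat !hatcoef_nseq.
  simpl_eqs; rewrite ?mul0n ?mul1n; lia'.
Qed.


Definition mkD n (L1 L2 m2 p q r : nat) : seq (seq nat) :=
  [:: nseq L1 1; nseq (L2 - m2) 2 ++ nseq m2 (2 * n);
      nseq r 3 ++ nseq q (2 * n).-1 ++ nseq p (2 * n)] ++ nseq (2 * n - 4) [::].

Lemma word_mkD n L1 L2 m2 p q r :
  word (mkD n L1 L2 m2 p q r) = W n L1 m2 (L2 - m2) p q r.
Proof. by rewrite /mkD word3 !rev_cat !rev_nseq /W -!catA. Qed.

Lemma D_wt n L1 L2 m2 p q r i : 2 <= n -> (n = 2 -> r = 0) -> 1 <= i <= n ->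
  hatcoef n (W n L1 m2 (L2 - m2) p q r) i =
  ((((i == 1) : nat)%:Z * (L1%:Z - m2%:Z - p%:Z)) + (((i == 2) : nat)%:Z * ((L2 - m2)%:Z - q%:Z))
    + (((i == 3) : nat)%:Z * r%:Z))%R.
Proof.
move=> hn h2 hi; rewrite /W !hatcoef_cat !hatcoef_nseq.
case: i hi => [|[|[|[|i]]]] hi //; simpl_eqs; rewrite ?mul0n ?mul1n ?mul0r ?mul1r; try lia'.
have [hn2|hn2] := eqVneq n 2.
  by rewrite (h2 hn2) muln0; simpl_eqs; lia'.
simpl_eqs; lia'.
Qed.

Lemma take_nseq' i m (v : nat) : take i (nseq m v) = nseq (minn i m) v.
Proof. elim: m i => [|m IH] [|i] //=; by rewrite IH minnSS. Qed.

Lemma W_pref (P : pred (seq nat)) n x1 x2 x3 x4 x5 x6 :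
  (forall j, j <= x1 -> P (W n j 0 0 0 0 0)) ->
  (forall j, j <= x2 -> P (W n x1 j 0 0 0 0)) ->
  (forall j, j <= x3 -> P (W n x1 x2 j 0 0 0)) ->
  (forall j, j <= x4 -> P (W n x1 x2 x3 j 0 0)) ->
  (forall j, j <= x5 -> P (W n x1 x2 x3 x4 j 0)) ->
  (forall j, j <= x6 -> P (W n x1 x2 x3 x4 x5 j)) ->
  forall j, P (take j (W n x1 x2 x3 x4 x5 x6)).
Proof.
move=> H1 H2 H3 H4 H5 H6 j; rewrite /W !take_cat !size_nseq !take_nseq'.
case: ifP => _; first by have := H1 _ (geq_minr j x1); rewrite /W /= cats0.
case: ifP => _; first by have := H2 _ (geq_minr (j - x1) x2); rewrite /W /= cats0.
case: ifP => _; first by have := H3 _ (geq_minr (j - x1 - x2) x3); rewrite /W /= cats0.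
case: ifP => _; first by have := H4 _ (geq_minr (j - x1 - x2 - x3) x4); rewrite /W /= cats0.
case: ifP => _; first by have := H5 _ (geq_minr (j - x1 - x2 - x3 - x4) x5); rewrite /W /= cats0.
exact: H6 (geq_minr _ _).
Qed.

Lemma all_nseq_r (P : pred nat) c v : P v -> all P (nseq c v).
Proof. by move=> h; rewrite all_nseq h orbT. Qed.

Lemma nth_blocks2 c1 v1 c2 v2 k :
  nth 0 (nseq c1 v1 ++ nseq c2 v2) k =
  if k < c1 then v1 else if k < c1 + c2 then v2 else 0.
Proof. by rewrite !nth_cat !size_nseq !nth_nseq; repeat (case: ifP => ?); lia. Qed.

Lemma D_ok n a b m2 p q r :
  2 <= n -> size a = 3 + (2 * n - 4) -> (forall r, 3 <= r -> rowlen a r = 0) ->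
  m2 + rowlen a 2 <= rowlen a 1 -> p <= rowlen a 0 - rowlen a 1 ->
  p + q + r = rowlen a 2 -> (n = 2 -> r = 0) ->
  rowlen b 0 = rowlen a 0 - m2 - p -> rowlen b 1 = rowlen a 1 - m2 - q ->
  (3 <= n -> rowlen b 2 = r) -> (forall i, 4 <= i <= n -> rowlen b i.-1 = 0) ->
  domres_nu n a b (mkD n (rowlen a 0) (rowlen a 1) m2 p q r).
Proof.
move=> hn Ha Hr h1 h2 h3 h4 b1 b2 b3 b4.
have L12 := rowlen_mono a 0; have L23 := rowlen_mono a 1.
apply/andP; split; first (apply/andP; split).
- rewrite /mkD ssyt3 //.
  apply/and5P; split.
  + by rewrite !size_cat !size_nseq; apply/and3P; split; apply/eqP; lia'.
  + by rewrite !all_cat; repeat (apply/andP; split); apply: all_nseq_r => /=; lia'.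
  + apply/and3P; split; first exact: sorted_nseq.
      by apply: sorted_nseq_cat; [exact: sorted_nseq | apply: all_nseq_r => /=; lia'].
    apply: sorted_nseq_cat; last by rewrite all_cat; apply/andP; split; apply: all_nseq_r => /=; lia'.
    by apply: sorted_nseq_cat; [exact: sorted_nseq | apply: all_nseq_r => /=; lia'].
  + apply/allP => k; rewrite mem_iota => hk.
    rewrite nth_nseq nth_blocks2; repeat (case: ifP => ?); lia'.
  + apply/allP => k; rewrite mem_iota => hk.
    rewrite nth_blocks2 nth_blocks3; repeat (case: ifP => ?); lia'.
- rewrite word_mkD; apply/allprefP; apply: W_pref => j hj; apply: W_hd => //; try lia'; move/h4; lia'.
- rewrite word_mkD; apply/allP => i; rewrite mem_iota => hi; apply/eqP.
  rewrite D_wt //.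
  case: i hi => [|[|[|[|i]]]] hi //; simpl_eqs; rewrite ?mul0n ?mul1n ?mul0r ?mul1r.
  + rewrite b1; lia'.
  + rewrite b2; lia'.
  + rewrite b3; lia'.
  + rewrite b4; lia'.
Qed.


Lemma skew3 n a e k m R1 R2 R3 : size a = 3 + m -> (forall r, 3 <= r -> rowlen a r = 0) ->
  rowlen e 0 = k -> rowlen e 1 = k -> rowlen e 2 = 0 ->
  skew_tableau n a e ([:: R1; R2; R3] ++ nseq m [::]) =
  [&& [&& size R1 == rowlen a 0 - k, size R2 == rowlen a 1 - k & size R3 == rowlen a 2],
      all (fun x => (1 <= x) && (x <= 2 * n)) (R1 ++ R2 ++ R3),
      [&& sorted leq R1, sorted leq R2 & sorted leq R3],
      all (fun j => (k <= j) ==> (nth 0 R1 (j - k) < nth 0 R2 (j - k))) (iota 0 (rowlen a 1)) &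
      all (fun j => (k <= j) ==> (nth 0 R2 (j - k) < nth 0 R3 (j - 0))) (iota 0 (rowlen a 2))].
Proof.
move=> Ha Hr e0 e1 e2; rewrite /skew_tableau size_cat size_nseq Ha /= eqxx /=.
rewrite (@iota_all_true _ 3 (0 + m)); last first.
  move=> [|[|[|r]]] hr //=.
  by rewrite nth_nseq if_same Hr.
rewrite (@iota_all_true _ 2 (0 + m)); last by move=> r hr /=; rewrite Hr.
by rewrite flatten_nseq_nil /= cats0 all_nseq orbT /entry /= !andbT e0 e1 e2 subn0.
Qed.

Definition mkE n k : seq nat := [:: 0; k; 0] ++ nseq (2 * n - 4) 0.

Lemma rowlen_mkE n k : [/\ rowlen (mkE n k) 0 = k, rowlen (mkE n k) 1 = k & rowlen (mkE n k) 2 = 0].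
Proof.
have h2 : rowlen (mkE n k) 2 = 0.
  by apply: rowlen_zero => -[|[|[|j]]] //= _; rewrite nth_nseq if_same.
have h1 : rowlen (mkE n k) 1 = k by rewrite rowlen_S // h2 addn0.
by split => //; rewrite rowlen_S // h1.
Qed.

Lemma E_char n a e : 2 <= n -> size a = 3 + (2 * n - 4) -> (forall r, 3 <= r -> rowlen a r = 0) ->
  size e = (2 * n).-1 -> shape_sub e a -> even_shape e ->
  e = mkE n (nth 0 e 1) /\ nth 0 e 1 <= rowlen a 1.
Proof.
move=> hn Ha Hr He /allP Hs /allP Hev.
have r3 : rowlen e 3 = 0.
  case: (leqP (size e) 3) => hs3; first by rewrite rowlen_ge.
  have := Hs 3; rewrite mem_iota Ha He Hr // => H.
  have : rowlen e 3 <= 0 by apply: H; lia'.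
  lia'.
have r1 : rowlen e 1 <= rowlen a 1.
  have := Hs 1; rewrite mem_iota Ha He => H; apply: H; lia'.
have hz : forall j, j != 1 -> nth 0 e j = 0.
  move=> j hj; case: (leqP (size e) j) => hs; first by rewrite nth_default.
  case: (leqP 3 j) => h3.
    have := rowlen_split h3 hs; rewrite r3; lia'.
  have := Hev j; rewrite mem_iota => H.
  have /implyP : odd j.+1 ==> (nth 0 e j == 0) by apply: H; lia'.
  move=> H'; apply/eqP; apply: H'; clear H.
  by case: j hj h3 {hs} => [|[|[|]]].
split.
  apply: (eq_from_nth (x0 := 0)); first by rewrite He size_cat size_nseq /=; lia'.
  move=> j hj; case: (eqVneq j 1) => [->//|hj1].
  rewrite hz //; case: j hj hj1 => [|[|[|j]]] //= _ _.
  by rewrite nth_nseq if_same.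
have := rowlen_split (c := e) (r := 1) (j := 1) (leqnn 1) ltac:(lia').
lia'.
Qed.

Lemma E_ok n a k : 2 <= n -> size a = 3 + (2 * n - 4) -> (forall r, 3 <= r -> rowlen a r = 0) ->
  k <= rowlen a 1 -> [&& size (mkE n k) == (2 * n).-1, shape_sub (mkE n k) a & even_shape (mkE n k)].
Proof.
move=> hn Ha Hr hk; have [e0 e1 e2] := rowlen_mkE n k.
have L12 := rowlen_mono a 0.
apply/and3P; split.
- by rewrite size_cat size_nseq /=; apply/eqP; lia'.
- apply/allP => r _; case: r => [|[|[|r]]]; rewrite ?e0 ?e1 ?e2 //; try lia'.
  rewrite rowlen_zero //.
  by move=> -[|[|[|j]]] //= _; rewrite nth_nseq if_same.
- apply/allP => j _; apply/implyP => hj.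
  by case: j hj => [|[|[|j]]] //= _; rewrite nth_nseq if_same.
Qed.


Lemma L_char n a b e k R1 R2 R3 :
  2 <= n -> size a = 3 + (2 * n - 4) -> (forall r, 3 <= r -> rowlen a r = 0) ->
  rowlen e 0 = k -> rowlen e 1 = k -> rowlen e 2 = 0 -> k <= rowlen a 1 ->
  LR n a e b ([:: R1; R2; R3] ++ nseq (2 * n - 4) [::]) ->
  [/\ R1 = nseq (rowlen a 0 - k) 1, R2 = nseq (rowlen a 1 - k) 2,
      R3 = nseq (count_mem 1 R3) 1 ++ nseq (count_mem 2 R3) 2 ++ nseq (count_mem 3 R3) 3,
      count_mem 1 R3 + count_mem 2 R3 + count_mem 3 R3 = rowlen a 2 &
   [/\ rowlen a 2 - k <= count_mem 3 R3, count_mem 3 R3 <= rowlen a 1 - k,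
       count_mem 2 R3 <= rowlen a 0 - rowlen a 1 &
   [/\ rowlen b 0 = rowlen a 0 - k + count_mem 1 R3, rowlen b 1 = rowlen a 1 - k + count_mem 2 R3,
       rowlen b 2 = count_mem 3 R3 & forall i, 4 <= i <= 2 * n -> rowlen b i.-1 = 0]]].
Proof.
move=> hn Ha Hr e0 e1 e2 hk /and3P[Hs Hlat Hw].
rewrite (@skew3 n a e k (2 * n - 4)) // in Hs.
case/and5P: Hs => /and3P[/eqP s1 /eqP s2 /eqP s3] Hrng /and3P[so1 so2 so3] c12 c23.
rewrite word3 in Hlat Hw.
have L12 := rowlen_mono a 0; have L23 := rowlen_mono a 1.
have rng : forall x, x \in R1 ++ R2 ++ R3 -> 1 <= x <= 2 * n.
  by move=> x hx; have := allP Hrng x hx.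
have E1 : R1 = nseq (rowlen a 0 - k) 1.
  rewrite -s1; apply/all_pred1P.
  apply/negPn/negP => Hn.
  have : ~~ all (pred1 1) (rev R1) by rewrite all_rev.
  case/first_bad => s1' [y [s2' [E Ha1 Hy]]].
  have hy : y \in R1 by rewrite -mem_rev E mem_cat mem_head orbT.
  have := rng y; rewrite mem_cat hy => /(_ isT) hy'.
  have Hd := rev_dec so1 E.
  have ny1 : y != 1 := Hy.
  have Es : s1' = [::].
    case: s1' E Ha1 Hd => // x s _ /= /andP[/eqP hx _] /andP[hyx _].
    lia'.
  rewrite Es in E.
  apply: (lat_bad Hlat (p := [::]) (y := y) (q := s2' ++ rev R2 ++ rev R3)); last by [].
    by rewrite E.
  lia'.
have lb2 : forall j, j < rowlen a 1 - k -> 2 <= nth 0 R2 j.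
  move=> j hj; have := allP c12 (j + k); rewrite mem_iota => H.
  have /implyP := H ltac:(lia'); rewrite addnK leq_addl E1 nth_nseq ifT; last lia'.
  move=> /(_ isT); lia'.
have lb2' : forall x, x \in R2 -> 2 <= x.
  by move=> x /(nthP 0) [j hj <-]; apply: lb2; rewrite -s2.
have E2 : R2 = nseq (rowlen a 1 - k) 2.
  rewrite -s2; apply/all_pred1P.
  apply/negPn/negP => Hn.
  have : ~~ all (pred1 2) (rev R2) by rewrite all_rev.
  case/first_bad => s1' [y [s2' [E Ha1 Hy]]].
  have hy : y \in R2 by rewrite -mem_rev E mem_cat mem_head orbT.
  have := rng y; rewrite !mem_cat hy orbT => /(_ isT) hy'.
  have hy2 := lb2' y hy.
  have Hd := rev_dec so2 E.
  have ny2 : y != 2 := Hy.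
  have Es : s1' = [::].
    case: s1' E Ha1 Hd => // x s _ /= /andP[/eqP hx _] /andP[hyx _].
    lia'.
  rewrite Es in E.
  apply: (lat_bad Hlat (p := rev R1) (y := y) (q := s2' ++ rev R3)).
  - by rewrite E.
  - lia'.
  - rewrite E1 rev_nseq count_nseq /=; simpl_eqs; by [].
have lb3' : forall x, x \in R3 -> 1 <= x.
  by move=> x hx; have := rng x; rewrite !mem_cat hx !orbT => /(_ isT) /andP[].
have A3 : all (fun x => [|| x == 1, x == 2 | x == 3]) R3.
  apply/negPn/negP => Hn.
  have : ~~ all (fun x => [|| x == 1, x == 2 | x == 3]) (rev R3) by rewrite all_rev.
  case/first_bad => s1' [y [s2' [E Ha1 Hy]]].
  have hy : y \in R3 by rewrite -mem_rev E mem_cat mem_head orbT.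
  have := rng y; rewrite !mem_cat hy !orbT => /(_ isT) hy'.
  have hy1 := lb3' y hy.
  have Hd := rev_dec so3 E.
  move: Hy; rewrite /= !negb_or => /and3P[/eqP ny1 /eqP ny2 /eqP ny3].
  have Es : s1' = [::].
    case: s1' E Ha1 Hd => // x s _ /= /andP[hx _] /andP[hyx _].
    by move: hx; case/or3P => /eqP hx; lia'.
  rewrite Es in E.
  apply: (lat_bad Hlat (p := rev R1 ++ rev R2) (y := y) (q := s2')).
  - by rewrite E -catA.
  - lia'.
  - rewrite E1 E2 !rev_nseq count_cat !count_nseq /=; simpl_eqs; by [].
have E3 := block3 so3 A3 isT.
have sz3 : count_mem 1 R3 + count_mem 2 R3 + count_mem 3 R3 = rowlen a 2.
  by have := congr1 size E3; rewrite !size_cat !size_nseq s3; lia'.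
have rev3 : rev R3 = nseq (count_mem 3 R3) 3 ++ nseq (count_mem 2 R3) 2 ++ nseq (count_mem 1 R3) 1.
  by rewrite {1}E3 !rev_cat !rev_nseq catA.
split => //; split.
- case: (leqP (rowlen a 2) k) => hk3; first lia'.
  have := allP c23 k; rewrite mem_iota => H.
  have /implyP := H ltac:(lia'); rewrite leqnn subnn subn0 E2 nth_nseq ifT; last lia'.
  rewrite {1}E3 nth_blocks3 => /(_ isT).
  repeat (case: ifP => ?); lia'.
- have := lat_pref Hlat (p := rev R1 ++ rev R2 ++ nseq (count_mem 3 R3) 3)
    (q := nseq (count_mem 2 R3) 2 ++ nseq (count_mem 1 R3) 1) _ (i := 2).
  rewrite rev3 -!catA => /(_ erefl ltac:(lia')).
  by rewrite E1 E2 !rev_nseq !count_cat !count_nseq /=; lia'.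
- have := lat_pref Hlat (p := rev R1 ++ rev R2 ++ nseq (count_mem 3 R3) 3 ++ nseq (count_mem 2 R3) 2)
    (q := nseq (count_mem 1 R3) 1) _ (i := 1).
  rewrite rev3 -!catA => /(_ erefl ltac:(lia')).
  by rewrite E1 E2 !rev_nseq !count_cat !count_nseq /=; lia'.
- have Hw' : forall i, 1 <= i <= 2 * n -> count_mem i (rev R1 ++ rev R2 ++ rev R3) = rowlen b i.-1.
    by move=> i hi; apply/eqP; apply: (allP Hw); rewrite mem_iota; lia'.
  rewrite rev3 E1 E2 !rev_nseq in Hw'.
  split.
  + by rewrite -(Hw' 1); [rewrite !count_cat !count_nseq /=; lia'|lia'].
  + by rewrite -(Hw' 2); [rewrite !count_cat !count_nseq /=; lia'|lia'].
  + by rewrite -(Hw' 3); [rewrite !count_cat !count_nseq /=; lia'|lia'].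
  + move=> i hi; rewrite -Hw'; last lia'.
    rewrite !count_cat !count_nseq /=; simpl_eqs; by [].
Qed.


Definition mkL n (L1 L2 k u s t : nat) : seq (seq nat) :=
  [:: nseq (L1 - k) 1; nseq (L2 - k) 2; nseq u 1 ++ nseq s 2 ++ nseq t 3] ++ nseq (2 * n - 4) [::].

Definition V (y1 y2 y3 y4 y5 : nat) := nseq y1 1 ++ nseq y2 2 ++ nseq y3 3 ++ nseq y4 2 ++ nseq y5 1.

Lemma word_mkL n L1 L2 k u s t : word (mkL n L1 L2 k u s t) = V (L1 - k) (L2 - k) t s u.
Proof. by rewrite /mkL word3 !rev_cat !rev_nseq /V -!catA. Qed.

Lemma V_pref (P : pred (seq nat)) x1 x2 x3 x4 x5 :
  (forall j, j <= x1 -> P (V j 0 0 0 0)) ->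
  (forall j, j <= x2 -> P (V x1 j 0 0 0)) ->
  (forall j, j <= x3 -> P (V x1 x2 j 0 0)) ->
  (forall j, j <= x4 -> P (V x1 x2 x3 j 0)) ->
  (forall j, j <= x5 -> P (V x1 x2 x3 x4 j)) ->
  forall j, P (take j (V x1 x2 x3 x4 x5)).
Proof.
move=> H1 H2 H3 H4 H5 j; rewrite /V !take_cat !size_nseq !take_nseq'.
case: ifP => _; first by have := H1 _ (geq_minr j x1); rewrite /V /= cats0.
case: ifP => _; first by have := H2 _ (geq_minr (j - x1) x2); rewrite /V /= cats0.
case: ifP => _; first by have := H3 _ (geq_minr (j - x1 - x2) x3); rewrite /V /= cats0.
case: ifP => _; first by have := H4 _ (geq_minr (j - x1 - x2 - x3) x4); rewrite /V /= cats0.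
exact: H5 (geq_minr _ _).
Qed.

Lemma V_lat n y1 y2 y3 y4 y5 : y2 + y4 <= y1 + y5 -> y3 <= y2 + y4 ->
  all (fun i => count_mem i.+1 (V y1 y2 y3 y4 y5) <= count_mem i (V y1 y2 y3 y4 y5)) (iota 1 (2 * n)).
Proof.
move=> h1 h2; apply/allP => i; rewrite mem_iota => hi; rewrite /V !count_cat !count_nseq /=.
case: i hi => [|[|[|[|i]]]] hi /=; try lia'.
Qed.

Lemma L_ok n a b k u s t :
  2 <= n -> size a = 3 + (2 * n - 4) -> (forall r, 3 <= r -> rowlen a r = 0) ->
  k <= rowlen a 1 -> u + s + t = rowlen a 2 -> rowlen a 2 - k <= t -> t <= rowlen a 1 - k ->
  s <= rowlen a 0 - rowlen a 1 ->
  rowlen b 0 = rowlen a 0 - k + u -> rowlen b 1 = rowlen a 1 - k + s -> rowlen b 2 = t ->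
  (forall i, 4 <= i <= 2 * n -> rowlen b i.-1 = 0) ->
  LRunion n a b (mkE n k, mkL n (rowlen a 0) (rowlen a 1) k u s t).
Proof.
move=> hn Ha Hr hk h1 h2 h3 h4 b1 b2 b3 b4.
have L12 := rowlen_mono a 0; have L23 := rowlen_mono a 1.
have [e0 e1 e2] := rowlen_mkE n k.
rewrite /LRunion /=.
case/and3P: (E_ok hn Ha Hr hk) => -> -> -> /=.
apply/and3P; split.
- rewrite /mkL (@skew3 n a (mkE n k) k (2 * n - 4)) //.
  apply/and5P; split.
  + by rewrite !size_cat !size_nseq; apply/and3P; split; apply/eqP; lia'.
  + by rewrite !all_cat; repeat (apply/andP; split); apply: all_nseq_r => /=; lia'.
  + rewrite !sorted_nseq /=.
    apply: sorted_nseq_cat; last by rewrite all_cat; apply/andP; split; apply: all_nseq_r => /=; lia'.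
    by apply: sorted_nseq_cat; [exact: sorted_nseq | apply: all_nseq_r => /=; lia'].
  + apply/allP => j; rewrite mem_iota => hj; apply/implyP => hkj.
    rewrite !nth_nseq; repeat (case: ifP => ?); lia'.
  + apply/allP => j; rewrite mem_iota => hj; apply/implyP => hkj.
    rewrite nth_nseq nth_blocks3; repeat (case: ifP => ?); lia'.
- rewrite word_mkL; apply/allprefP.
  apply: (V_pref (P := fun p => all (fun i => count_mem i.+1 p <= count_mem i p) (iota 1 (2 * n)))) => j hj;
    apply: V_lat; lia'.
- rewrite word_mkL; apply/allP => i; rewrite mem_iota => hi; apply/eqP.
  rewrite /V !count_cat !count_nseq /=.
  case: i hi => [|[|[|[|i]]]] hi //=.
  + rewrite b1; lia'.
  + rewrite b2; lia'.
  + rewrite b3; lia'.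
  + rewrite (b4 i.+4); last lia'. by simpl_eqs.
Qed.


Lemma decT n a T : size a = 3 + (2 * n - 4) -> (forall r, 3 <= r -> rowlen a r = 0) ->
  ssyt n a T -> T = [:: nth [::] T 0; nth [::] T 1; nth [::] T 2] ++ nseq (2 * n - 4) [::].
Proof.
move=> Ha Hr /and5P[/eqP hs /allP hz _ _ _].
suff Hz : forall r, 3 <= r -> nth [::] T r = [::].
  by have := @rows3 T (3 + (2 * n - 4)) ltac:(by rewrite hs Ha) isT Hz; rewrite addKn.
move=> r hr; case: (leqP (size T) r) => h; first by rewrite nth_default.
have := hz r; rewrite mem_iota => H.
have /eqP : size (nth [::] T r) == rowlen a r by apply: H; lia'.
by rewrite Hr // => /size0nil.
Qed.

Lemma decL n a e T : size a = 3 + (2 * n - 4) -> (forall r, 3 <= r -> rowlen a r = 0) ->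
  skew_tableau n a e T -> T = [:: nth [::] T 0; nth [::] T 1; nth [::] T 2] ++ nseq (2 * n - 4) [::].
Proof.
move=> Ha Hr /and5P[/eqP hs /allP hz _ _ _].
suff Hz : forall r, 3 <= r -> nth [::] T r = [::].
  by have := @rows3 T (3 + (2 * n - 4)) ltac:(by rewrite hs Ha) isT Hz; rewrite addKn.
move=> r hr; case: (leqP (size T) r) => h; first by rewrite nth_default.
have := hz r; rewrite mem_iota => H.
have /eqP : size (nth [::] T r) == rowlen a r - rowlen e r by apply: H; lia'.
by rewrite Hr // => /size0nil.
Qed.

Definition Fmap n (L1 L2 L3 : nat) (T : seq (seq nat)) : seq nat * seq (seq nat) :=
  let m2 := count_mem (2 * n) (nth [::] T 1) in
  let p := count_mem (2 * n) (nth [::] T 2) in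
  let q := count_mem (2 * n).-1 (nth [::] T 2) in
  (mkE n (m2 + p + q), mkL n L1 L2 (m2 + p + q) q p (L3 - p - q)).

Definition Gmap n (L1 L2 : nat) (x : seq nat * seq (seq nat)) : seq (seq nat) :=
  let k := nth 0 x.1 1 in
  let u := count_mem 1 (nth [::] x.2 2) in
  let s := count_mem 2 (nth [::] x.2 2) in
  let t := count_mem 3 (nth [::] x.2 2) in
  mkD n L1 L2 (k - s - u) s u t.

Lemma rowlen_b_hi b n i : size b = n -> n <= i -> rowlen b i = 0.
Proof. by move=> hb hi; rewrite rowlen_ge // hb. Qed.

Lemma D_full n a b T : 2 <= n -> size a = 3 + (2 * n - 4) -> (forall r, 3 <= r -> rowlen a r = 0) ->
  size b = n -> domres_nu n a b T ->
  let m2 := count_mem (2 * n) (nth [::] T 1) in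
  let p := count_mem (2 * n) (nth [::] T 2) in
  let q := count_mem (2 * n).-1 (nth [::] T 2) in
  [/\ T = mkD n (rowlen a 0) (rowlen a 1) m2 p q (rowlen a 2 - p - q),
      m2 + rowlen a 2 <= rowlen a 1, p <= rowlen a 0 - rowlen a 1, p + q <= rowlen a 2 &
   [/\ (n = 2 -> p + q = rowlen a 2),
       rowlen b 0 = rowlen a 0 - m2 - p, rowlen b 1 = rowlen a 1 - m2 - q,
       rowlen b 2 = rowlen a 2 - p - q &
       forall i, 4 <= i <= 2 * n -> rowlen b i.-1 = 0]].
Proof.
move=> hn Ha Hr Hb H.
have HT := decT Ha Hr (andP (andP H).1).1.
move: H; rewrite HT /=.
move: (nth [::] T 0) (nth [::] T 1) (nth [::] T 2) => R1 R2 R3 H.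
have [E1 E2 E3 h2 [sz3 c1 c2]] := D_char hn Ha Hr H.
set m2 := count_mem (2 * n) R2 in E2 c1 *; set p := count_mem (2 * n) R3 in E3 sz3 h2 c2 *.
set q := count_mem (2 * n).-1 R3 in E3 sz3 h2 *.
clearbody m2 p q.
have HT' : [:: R1, R2, R3 & nseq (2 * n - 4) [::]] = mkD n (rowlen a 0) (rowlen a 1) m2 p q (rowlen a 2 - p - q).
  by rewrite /mkD -E1 -E2 -E3.
rewrite HT' in H.
have Hw : forall i, i < n -> hatcoef n (word (mkD n (rowlen a 0) (rowlen a 1) m2 p q (rowlen a 2 - p - q))) i.+1 = rowlen b i.
  by move=> i hi; apply/eqP; apply: (allP (andP H).2 i.+1); rewrite mem_iota; lia'.
have L12 := rowlen_mono a 0; have L23 := rowlen_mono a 1.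
have r0 : n = 2 -> rowlen a 2 - p - q = 0 by move=> /h2; lia'.
rewrite word_mkD in Hw.
split => //; split => //.
- have := Hw 0 ltac:(lia'); rewrite (D_wt _ _ _ _ _ hn r0); last lia'. simpl_eqs; lia'.
- have := Hw 1 ltac:(lia'); rewrite (D_wt _ _ _ _ _ hn r0); last lia'. simpl_eqs; lia'.
- case: (leqP n 2) => hn2.
    rewrite (@rowlen_b_hi b n) //. have := h2 ltac:(lia'); lia'.
  have := Hw 2 ltac:(lia'); rewrite (D_wt _ _ _ _ _ hn r0); last lia'. simpl_eqs; lia'.
- move=> i hi; case: (leqP n i.-1) => hni; first by rewrite (@rowlen_b_hi b n).
  have := Hw i.-1 ltac:(lia'); rewrite (_ : i.-1.+1 = i); last lia'.
  rewrite (D_wt _ _ _ _ _ hn r0); last lia'. simpl_eqs; lia'.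
Qed.

Lemma L_full n a b x : 2 <= n -> size a = 3 + (2 * n - 4) -> (forall r, 3 <= r -> rowlen a r = 0) ->
  size b = n -> LRunion n a b x ->
  let k := nth 0 x.1 1 in
  let u := count_mem 1 (nth [::] x.2 2) in
  let s := count_mem 2 (nth [::] x.2 2) in
  let t := count_mem 3 (nth [::] x.2 2) in
  [/\ x = (mkE n k, mkL n (rowlen a 0) (rowlen a 1) k u s t),
      k <= rowlen a 1, u + s + t = rowlen a 2, rowlen a 2 - k <= t &
   [/\ t <= rowlen a 1 - k, s <= rowlen a 0 - rowlen a 1,
       rowlen b 0 = rowlen a 0 - k + u, rowlen b 1 = rowlen a 1 - k + s &
   [/\ rowlen b 2 = t, (n = 2 -> t = 0) &
       forall i, 4 <= i <= 2 * n -> rowlen b i.-1 = 0]]].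
Proof.
move=> hn Ha Hr Hb; case: x => e L; rewrite /LRunion /= => /and4P[/eqP He Hs Hev HLR].
have [Ee hk] := E_char hn Ha Hr He Hs Hev.
have [e0 e1 e2] := rowlen_mkE n (nth 0 e 1).
rewrite -Ee in e0 e1 e2.
have [HL1 _ _] := and3P HLR.
have HL := decL Ha Hr HL1.
move: HLR; rewrite HL /=.
move: (nth [::] L 0) (nth [::] L 1) (nth [::] L 2) => R1 R2 R3 H.
have [E1 E2 E3 sz3 [c1 c2 c3 [b1 b2 b3 b4]]] := L_char hn Ha Hr e0 e1 e2 hk H.
split => //.
- by rewrite {1}Ee /mkL -E1 -E2 -E3.
split => //; split => //.
move=> hn2; rewrite -b3 (@rowlen_b_hi b n) //; lia'.
Qed.


Lemma sig_eq (A : Type) (P : A -> bool) (x y : {z | P z}) : sval x = sval y -> x = y.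
Proof.
case: x y => [x hx] [y hy] /= E; subst; congr exist; apply: bool_irrelevance.
Qed.

Theorem proposition6p6 (n : nat) (a b : seq nat) :
  2 <= n -> size a = (2 * n).-1 -> size b = n ->
  (n = 2 \/ forall j, 3 <= j -> nth 0 a j = 0) ->
  exists f : {T : seq (seq nat) | domres_nu n a b T} ->
             {p : seq nat * seq (seq nat) | LRunion n a b p},
    bijective f.
Proof.
move=> hn Ha0 Hb Hor.
have Ha : size a = 3 + (2 * n - 4) by rewrite Ha0; lia'.
have Hr : forall r, 3 <= r -> rowlen a r = 0.
  move=> r hr; apply: rowlen_zero => j hj; case: Hor => [h2|H]; last by apply: H; lia'.
  by rewrite nth_default // Ha; lia'.
have L12 := rowlen_mono a 0; have L23 := rowlen_mono a 1.
pose F' := Fmap n (rowlen a 0) (rowlen a 1) (rowlen a 2).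
pose G' := Gmap n (rowlen a 0) (rowlen a 1).
have Fok : forall T, domres_nu n a b T -> LRunion n a b (F' T).
  move=> T H; have [ET c1 c2 c3 [h2 b1 b2 b3 b4]] := D_full hn Ha Hr Hb H.
  rewrite /F' /Fmap; apply: L_ok => //; try lia'.
have Gok : forall x, LRunion n a b x -> domres_nu n a b (G' x).
  move=> x H; have [Ex hk hsz ht [ht2 hs hb0 hb1 [hb2 hn2 hb4]]] := L_full hn Ha Hr Hb H.
  rewrite /G' /Gmap; apply: D_ok => //; try lia'.
  all: try by move=> i hi; apply: hb4; lia'.
  all: try by move=> _; apply: hn2; lia'.
pose f := fun x : {T : seq (seq nat) | domres_nu n a b T} =>
  exist (fun p => LRunion n a b p) (F' (sval x)) (Fok _ (svalP x)).
pose g := fun x : {p : seq nat * seq (seq nat) | LRunion n a b p} =>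
  exist (fun T => domres_nu n a b T) (G' (sval x)) (Gok _ (svalP x)).
exists f; exists g.
- move=> [T H]; apply: sig_eq => /=.
  have [ET c1 c2 c3 [h2 b1 b2 b3 b4]] := D_full hn Ha Hr Hb H.
  rewrite {2}ET /G' /Gmap /F' /Fmap.
  set m2 := count_mem (2 * n) (nth [::] T 1) in c1 c2 c3 h2 b1 b2 b3 *.
  set p := count_mem (2 * n) (nth [::] T 2) in c1 c2 c3 h2 b1 b2 b3 *.
  set q := count_mem (2 * n).-1 (nth [::] T 2) in c1 c2 c3 h2 b1 b2 b3 *.
  clearbody m2 p q.
  rewrite /= !count_cat !count_nseq /=.
  congr (mkD _ _ _ _ _ _ _); lia'.
- move=> [x H]; apply: sig_eq => /=.
  have [Ex hk hsz ht [ht2 hs hb0 hb1 [hb2 hn2 hb4]]] := L_full hn Ha Hr Hb H.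
  rewrite {2}Ex /G' /Gmap /F' /Fmap /mkD.
  set k := nth 0 x.1 1 in hk hsz ht ht2 hs hb0 hb1 hb2 hn2 *.
  set u := count_mem 1 (nth [::] x.2 2) in hk hsz ht ht2 hs hb0 hb1 hb2 hn2 *.
  set s' := count_mem 2 (nth [::] x.2 2) in hk hsz ht ht2 hs hb0 hb1 hb2 hn2 *.
  set t := count_mem 3 (nth [::] x.2 2) in hk hsz ht ht2 hs hb0 hb1 hb2 hn2 *.
  clearbody k u s' t.
  rewrite /= !count_cat !count_nseq /=.
  have [hn2'|hn2'] := eqVneq n 2.
    have t0 := hn2 hn2'.
    rewrite t0 hn2' /=.
    congr (mkE _ _, mkL _ _ _ _ _ _ _); lia'.
  simpl_eqs; rewrite ?mul0n ?mul1n.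
  congr (mkE _ _, mkL _ _ _ _ _ _ _); lia'.
Qed.
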